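(* Let $u:[0,T]\times U\to[0,\infty)$ with each $u(t)$ continuous, and $t\in(0,T]$. The family of sets $\Gamma^+_{\eta,\sigma,r_0}(u,t)$ is monotone decreasing with respect to $\eta$ and $r_0$ and monotone increasing with respect to $\sigma$. Furthermore $$\Gamma^+(u,t)=\bigcup_{\eta>0}\bigcap_{\sigma>0}\bigcup_{r_0>0}\Gamma^+_{\eta,\sigma,r_0}(u,t),$$ and consequently, if $\mathcal{H}^{d-1}(\Gamma^+(u,t))>0$ then there is $\eta>0$ such that for every $\sigma>0$ there is $r_0(\sigma)>0$ with $\mathcal{H}^{d-1}(\Gamma^+_{\eta,\sigma,r_0}(u,t))>0$.
   Context: $U\subset\mathbb{R}^d$ open, $\mu_+>0$, $\Omega(t)=\{u(t)>0\}$. For $x_0\in\partial\Omega(t_0)$: $V_n(t_0,x_0)>0$ means there are $\eta,r_0>0$ with $\{x:|x-x_0|\le\eta(t_0-s)\}\subset\Omega(s)^\complement$ for all $t_0-r_0\le s<t_0$; for given $\eta,r_0>0$ one writes $V_n^{r_0}(t_0,x_0)\ge\eta$ if this holds with those specific $\eta,r_0$. $D_+u(t,x_0)=\{p: u(t,x)\le p\cdot(x-x_0)+o(|x-x_0|)\text{ for }x\in\overline{\Omega(t)}\}$, and for $\sigma,r_0>0$, $D_+^{\sigma,r_0}u(t,x_0)=\{p: u(t,x)\le p\cdot(x-x_0)+\sigma|x-x_0|\text{ for }x\in B_{r_0}(x_0)\cap\overline{\Omega(t)}\}$. Then $\Gamma^+(u,t)=\{x\in\partial\Omega(t): V_n(t,x)>0,\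 |p|^2<1+\mu_+\text{ for some }p\in D_+u(t,x)\}$ and $\Gamma^+_{\eta,\sigma,r_0}(u,t)=\{x\in\partial\Omega(t): V_n^{r_0}(t,x)\ge\eta\text{ and there is }p\in D_+^{\sigma,r_0}u(t,x)\text{ with }|p|^2-(1+\mu_+)<-\eta\}$. *)

(* Defs.v *)
From HB Require Import structures.
From mathcomp Require Import all_boot all_order all_algebra.
From mathcomp Require Import all_classical all_reals all_analysis.
Set Implicit Arguments. Unset Strict Implicit. Unset Printing Implicit Defensive.
Import Order.TTheory GRing.Theory Num.Theory.
Import numFieldNormedType.Exports.
Local Open Scope classical_set_scope.
Local Open Scope ring_scope.

(* Points of R^d are row vectors 'rV[R]_d.  Euclidean structure written out
   explicitly (the library norm on matrices is the max norm). *)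
Definition dotv (R : realType) (d : nat) (p q : 'rV[R]_d) : R :=
  \sum_(i < d) p ord0 i * q ord0 i.

Definition enorm (R : realType) (d : nat) (v : 'rV[R]_d) : R :=
  Num.sqrt (dotv v v).

Definition Omega (R : realType) (d : nat) (U : set 'rV[R]_d)
  (u : R -> 'rV[R]_d -> R) (t : R) : set 'rV[R]_d :=
  [set x | U x /\ 0 < u t x].

Definition bdry (R : realType) (d : nat) (A : set 'rV[R]_d) : set 'rV[R]_d :=
  closure A `\` interior A.

Definition Vn_ge (R : realType) (d : nat) (U : set 'rV[R]_d)
  (u : R -> 'rV[R]_d -> R) (t0 : R) (x0 : 'rV[R]_d) (eta r0 : R) : Prop :=
  forall s : R, 0 <= s -> t0 - r0 <= s -> s < t0 ->
    forall x : 'rV[R]_d, enorm (x - x0) <= eta * (t0 - s) ->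
      ~ Omega U u s x.

Definition Vn_pos (R : realType) (d : nat) (U : set 'rV[R]_d)
  (u : R -> 'rV[R]_d -> R) (t0 : R) (x0 : 'rV[R]_d) : Prop :=
  exists eta r0 : R, 0 < eta /\ 0 < r0 /\ Vn_ge U u t0 x0 eta r0.

Definition Dplus (R : realType) (d : nat) (U : set 'rV[R]_d)
  (u : R -> 'rV[R]_d -> R) (t : R) (x0 : 'rV[R]_d) : set 'rV[R]_d :=
  [set p | forall eps : R, 0 < eps -> exists delta : R, 0 < delta /\
     forall x, closure (Omega U u t) x -> enorm (x - x0) < delta ->
       u t x <= dotv p (x - x0) + eps * enorm (x - x0)].

Definition Dplus_sr (R : realType) (d : nat) (U : set 'rV[R]_d)
  (u : R -> 'rV[R]_d -> R) (t : R) (x0 : 'rV[R]_d) (sigma r0 : R)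
  : set 'rV[R]_d :=
  [set p | forall x, enorm (x - x0) < r0 -> closure (Omega U u t) x ->
       u t x <= dotv p (x - x0) + sigma * enorm (x - x0)].

Definition GammaPlus (R : realType) (d : nat) (U : set 'rV[R]_d)
  (mu : R) (u : R -> 'rV[R]_d -> R) (t : R) : set 'rV[R]_d :=
  [set x | bdry (Omega U u t) x /\ Vn_pos U u t x /\
     exists p, Dplus U u t x p /\ dotv p p < 1 + mu].

Definition GammaPlus_esr (R : realType) (d : nat) (U : set 'rV[R]_d)
  (mu : R) (u : R -> 'rV[R]_d -> R) (t eta sigma r0 : R) : set 'rV[R]_d :=
  [set x | bdry (Omega U u t) x /\ Vn_ge U u t x eta r0 /\
     exists p, Dplus_sr U u t x sigma r0 p /\ dotv p p - (1 + mu) < - eta].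

Definition ediam (R : realType) (d : nat) (C : set 'rV[R]_d) : \bar R :=
  ereal_sup [set (enorm (x - y))%:E | x in C & y in C].

Definition hcontrib (R : realType) (d : nat) (s : nat) (C : set 'rV[R]_d)
  : \bar R :=
  if pselect (C = set0) then 0%E else ((fine (ediam C)) ^+ s)%:E.

Definition hausdorff_delta (R : realType) (d : nat) (s : nat) (delta : R)
  (A : set 'rV[R]_d) : \bar R :=
  ereal_inf [set (\sum_(0 <= i <oo) hcontrib s (C i))%E |
     C in [set C : nat -> set 'rV[R]_d |
        A `<=` \bigcup_i C i /\ forall i, (ediam (C i) <= delta%:E)%E]].

(* s-dimensional Hausdorff (outer) measure
   H^s(A) = lim_{delta -> 0+} H^s_delta(A) = sup_{delta > 0} H^s_delta(A)
   (unnormalized convention, as in Falconer). *)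
Definition hausdorff (R : realType) (d : nat) (s : nat) (A : set 'rV[R]_d)
  : \bar R :=
  ereal_sup [set hausdorff_delta s delta A | delta in [set delta : R | 0 < delta]].

(* Main.v *)
Require Import Defs.
From HB Require Import structures.
From mathcomp Require Import all_boot all_order all_algebra.
From mathcomp Require Import all_classical all_reals all_analysis.
From mathcomp Require Import ring lra.
Import Order.TTheory GRing.Theory Num.Theory.
Import numFieldNormedType.Exports.
Local Open Scope classical_set_scope.
Local Open Scope ring_scope.

Section Aux.
Variables (R : realType) (d : nat).
Implicit Types (p q v : 'rV[R]_d).

Lemma enorm_ge0 v : 0 <= enorm v.
Proof. exact: sqrtr_ge0. Qed.

Lemma dotv_ge0 v : 0 <= dotv v v.
Proof. by apply: sumr_ge0 => i _; rewrite -expr2 sqr_ge0. Qed.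

Lemma sq_le_dotv v i : v ord0 i ^+ 2 <= dotv v v.
Proof.
rewrite /dotv (bigD1 i) //= expr2 lerDl.
by apply: sumr_ge0 => j _; rewrite -expr2 sqr_ge0.
Qed.

Lemma coord_le v i : `|v ord0 i| <= enorm v.
Proof.
by rewrite /enorm -sqrtr_sqr ler_sqrt ?sq_le_dotv ?dotv_ge0.
Qed.

Lemma dotvB p q v : dotv (p - q) v = dotv p v - dotv q v.
Proof.
rewrite /dotv -sumrB; apply: eq_bigr => i _; rewrite !mxE; ring.
Qed.

Lemma dot_bound q v t : (forall i, `|q ord0 i| <= t) ->
  `|dotv q v| <= d%:R * t * enorm v.
Proof.
move=> ht; rewrite /dotv (le_trans (ler_norm_sum _ _ _)) //.
apply: (@le_trans _ _ (\sum_(i < d) t * enorm v)).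
  apply: ler_sum => i _; rewrite normrM ler_pM //.
  exact: coord_le.
by rewrite sumr_const card_ord mulr_natl mulrnAl.
Qed.

Lemma entry_le_mxnorm (q : 'rV[R]_d) i : `|q ord0 i| <= `|q|.
Proof.
rewrite (_ : `|q| = mx_norm q) // mx_normrE.
by apply/bigmax_geP; right => /=; exists (ord0, i).
Qed.


Lemma dplus_limit (U : set 'rV[R]_d) u t x0 (c : R)
   (ps : nat -> 'rV[R]_d) (rs : nat -> R) :
  0 <= c -> (forall n, 0 < rs n) ->
  (forall n, Dplus_sr U u t x0 (n.+1%:R^-1) (rs n) (ps n)) ->
  (forall n, dotv (ps n) (ps n) <= c) ->
  exists p, Dplus U u t x0 p /\ dotv p p <= c.
Proof.
move=> c0 rs0 hD hc.
pose M := c + 1.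
have psM n i : `|ps n ord0 i| <= M.
  have := sq_le_dotv (ps n) i; have := hc n.
  rewrite ler_norml /M => h1 h2; apply/andP; split; nra.
have Kc : compact [set v : 'rV[R]_d | forall i, `[-M, M]%classic (v ord0 i)].
  apply: (@rV_compact _ _ (fun=> `[-M, M]%classic)).
  by move=> _; apply: segment_compact.
have FK : (ps @ \oo) [set v : 'rV[R]_d | forall i, `[-M, M]%classic (v ord0 i)].
  exists 0%N => // n _ i /=; rewrite in_itv /= -ler_norml; exact: psM.
have [p [Kp clp]] := Kc _ _ FK.
have app e N : 0 < e -> exists n, (N <= n)%N /\ `|p - ps n| < e.
  move=> e0.
  have [] := clp [set q | exists2 n, (N <= n)%N & q = ps n] (ball p e) _ (nbhsx_ballx p e e0).
    by exists N => // n /= Nn; exists n.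
  move=> q [[n Nn ->]] hb; exists n; split => //.
  by move: hb; rewrite -ball_normE /=.
have ent n i : `|p ord0 i - ps n ord0 i| <= `|p - ps n|.
  by move: (entry_le_mxnorm (p - ps n) i); rewrite !mxE; apply.
have Kp' i : `|p ord0 i| <= M.
  have := Kp i; rewrite /= in_itv /= => /andP[a b]; rewrite ler_norml; apply/andP; split => //.
have M0 : 0 < M by rewrite /M; lra.
exists p; split; last first.
  rewrite leNgt; apply/negP => hlt.
  pose e := dotv p p - c.
  have e0 : 0 < e by rewrite /e; lra.
  pose tau := e / (d%:R * 2 * M + 1).
  have dM : 0 < d%:R * 2 * M + 1 by have : 0 <= d%:R :> R by []; nra.
  have tau0 : 0 < tau by rewrite /tau divr_gt0.
  have tae : tau * (d%:R * 2 * M + 1) = e by rewrite /tau mulfVK // gt_eqF.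
  have [n [_ hn]] := app tau 0%N tau0.
  have : dotv p p <= dotv (ps n) (ps n) + d%:R * (2 * M * tau).
    have -> : dotv (ps n) (ps n) + d%:R * (2 * M * tau) = \sum_(i < d) (ps n ord0 i * ps n ord0 i + 2 * M * tau).
      by rewrite big_split /= sumr_const card_ord mulr_natl.
    apply: ler_sum => i _.
    have h5 := ent n i; have := Kp' i; have := psM n i.
    rewrite !ler_norml => /andP[h1 h2] /andP[h3 h4].
    have /andP[h6 h7] : - tau <= p ord0 i - ps n ord0 i <= tau.
      by rewrite -ler_norml; apply: (le_trans h5); apply: ltW.
    nra.
  have := hc n; have : 0 <= d%:R :> R by []. move: tae; rewrite /e => tae. nra.
move=> eps eps0.
pose tau := eps / (2 * (d%:R + 1)).
have d0 : 0 <= d%:R :> R by [].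
have tau0 : 0 < tau by rewrite /tau divr_gt0 //; lra.
have dt : d%:R * tau <= eps / 2.
  have : tau * (2 * (d%:R + 1)) = eps by rewrite /tau mulfVK // gt_eqF //; lra.
  nra.
have [n [Nn hn]] := app tau (Num.Def.trunc (2 / eps)) tau0.
exists (rs n); split => // x cl hx.
have := hD n x hx cl.
have hy : n.+1%:R^-1 <= eps / 2.
  have h1 := truncnS_gt (2 / eps).
  have h2 : (Num.Def.trunc (2 / eps)).+1%:R <= n.+1%:R :> R by rewrite ler_nat ltnS.
  have h3 : 2 / eps < n.+1%:R by lra.
  apply: ltW; rewrite -invf_div ltf_pV2 ?posrE ?divr_gt0 //.
have hb : `|dotv (p - ps n) (x - x0)| <= d%:R * tau * enorm (x - x0).
  apply: dot_bound => i; rewrite !mxE; apply: (le_trans (ent n i)); exact: ltW.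
rewrite dotvB in hb.
have e0 := enorm_ge0 (x - x0).
move: hb; rewrite ler_norml => /andP[hb1 hb2] hu.
have p1 : n.+1%:R^-1 * enorm (x - x0) <= eps / 2 * enorm (x - x0) by apply: ler_wpM2r.
have p2 : d%:R * tau * enorm (x - x0) <= eps / 2 * enorm (x - x0) by apply: ler_wpM2r.
have hu2 : u t x <= dotv (ps n) (x - x0) + n.+1%:R^-1 * enorm (x - x0) := hu.
have hh : eps / 2 * enorm (x - x0) = (eps * enorm (x - x0)) / 2 by rewrite mulrAC.
move: p1 p2 hu2 hb1 hb2; rewrite hh; clear hu; generalize (eps * enorm (x - x0)) (n.+1%:R^-1 * enorm (x - x0)) (d%:R * tau * enorm (x - x0)) (dotv p (x - x0)) (dotv (ps n) (x - x0)) (u t x) => K A B C D E; move=> *; lra.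
Qed.

Lemma small_inv (a : R) : 0 < a -> exists n : nat, n.+1%:R^-1 <= a.
Proof.
move=> a0; exists (Num.Def.trunc a^-1).
have h1 := truncnS_gt a^-1.
rewrite -[leRHS]invrK; apply: ltW; rewrite ltf_pV2 ?posrE ?invr_gt0 //.
Qed.

Section Gam.
Variables (U : set 'rV[R]_d) (mu : R) (u : R -> 'rV[R]_d -> R) (t : R).

Lemma mono_eta eta1 eta2 sigma r0 : 0 < eta1 -> eta1 <= eta2 ->
  GammaPlus_esr U mu u t eta2 sigma r0 `<=` GammaPlus_esr U mu u t eta1 sigma r0.
Proof.
move=> e1 le x [bx [hV [p [hp hd]]]]; split => //; split.
  move=> s s0 s1 s2 y hy; apply: (hV s s0 s1 s2 y); apply: (le_trans hy).
  by apply: ler_wpM2r => //; rewrite subr_ge0 ltW.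
by exists p; split => //; lra.
Qed.

Lemma mono_r0 eta sigma r1 r2 : r1 <= r2 ->
  GammaPlus_esr U mu u t eta sigma r2 `<=` GammaPlus_esr U mu u t eta sigma r1.
Proof.
move=> le x [bx [hV [p [hp hd]]]]; split => //; split.
  move=> s s0 s1 s2 y hy; apply: (hV s s0 _ s2 y hy); lra.
exists p; split => // y hy cl; apply: hp cl; lra.
Qed.

Lemma mono_sigma eta sigma1 sigma2 r0 : sigma1 <= sigma2 ->
  GammaPlus_esr U mu u t eta sigma1 r0 `<=` GammaPlus_esr U mu u t eta sigma2 r0.
Proof.
move=> le x [bx [hV [p [hp hd]]]]; split => //; split => //.
exists p; split => // y hy cl; apply: (le_trans (hp y hy cl)).
by rewrite lerD2l; apply: ler_wpM2r => //; apply: enorm_ge0.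
Qed.

Lemma rep :
  GammaPlus U mu u t =
    \bigcup_(eta in [set e : R | 0 < e])
      \bigcap_(sigma in [set e : R | 0 < e])
        \bigcup_(r0 in [set e : R | 0 < e]) GammaPlus_esr U mu u t eta sigma r0.
Proof.
apply/seteqP; split.
  move=> x [bx [[e0 [r00 [he0 [hr0 hV]]]] [p [hp hpp]]]].
  pose eta := Num.min e0 ((1 + mu - dotv p p) / 2).
  have := le_refl eta; rewrite {2}/eta le_min => /andP[m1 m2].
  have eta0 : 0 < eta by rewrite /eta lt_min he0 /=; lra.
  exists eta => // sigma /= sig0.
  have [delta [dl0 hdl]] := hp sigma sig0.
  pose r := Num.min delta r00.
  have := le_refl r; rewrite {2}/r le_min => /andP[n1 n2].
  have r0 : 0 < r by rewrite /r lt_min dl0 hr0.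
  exists r => //; split => //; split.
    move=> s s0 s1 s2 y hy; apply: (hV s s0 _ s2 y); first lra.
    apply: (le_trans hy); apply: ler_wpM2r => //; lra.
  exists p; split; last lra.
  move=> y hy cl; apply: hdl cl _; lra.
move=> x [eta /= eta0 hx].
have [r1 r10 [bx [hV _]]] := hx 1 ltr01.
have /choice [f hf] : forall n : nat, exists pr : R * 'rV[R]_d, 0 < pr.1 /\
    Dplus_sr U u t x (n.+1%:R^-1) pr.1 pr.2 /\ dotv pr.2 pr.2 <= 1 + mu - eta.
  move=> n; have hn : 0 < n.+1%:R^-1 :> R by rewrite invr_gt0.
  have [r r0 [_ [_ [p [hp hpp]]]]] := hx _ hn.
  by exists (r, p); split => //; split => //; lra.
have c0 : 0 <= 1 + mu - eta.
  have [_ [_ h]] := hf 0%N; exact: le_trans (dotv_ge0 _) h.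
have [p [hp hpp]] := @dplus_limit U u t x _ (fun n => (f n).2) (fun n => (f n).1) c0 (fun n => (hf n).1)
   (fun n => (hf n).2.1) (fun n => (hf n).2.2).
split => //; split; first by exists eta, r1.
by exists p; split => //; lra.
Qed.

End Gam.

Section Haus.
Local Open Scope ereal_scope.

Lemma hcontrib_ge0 s (C : set 'rV[R]_d) : 0 <= hcontrib s C.
Proof.
rewrite /hcontrib; case: pselect => // hC.
rewrite lee_fin exprn_ge0 // fine_ge0 //.
have [x Cx] : C !=set0 by apply/set0P/eqP.
apply: (le_trans _ (ereal_sup_ubound _)); last first.
  by exists x => //; exists x.
by rewrite lee_fin enorm_ge0.
Qed.

Lemma hcontrib_set0 s : hcontrib s (set0 : set 'rV[R]_d) = 0.
Proof. by rewrite /hcontrib; case: pselect. Qed.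

Lemma ediam_set0 : ediam (set0 : set 'rV[R]_d) = -oo.
Proof.
rewrite /ediam; apply/eqP; rewrite eq_le leNye andbT.
by apply: ge_ereal_sup => _ [x []].
Qed.

Lemma H_le0 s (A : set 'rV[R]_d) :
  (forall delta, (0 < delta)%R -> hausdorff_delta s delta A <= 0) ->
  hausdorff s A <= 0.
Proof. by move=> h; apply: ge_ereal_sup => _ [delta d0 <-]; exact: h. Qed.

Lemma Hd_le_H s delta (A : set 'rV[R]_d) : (0 < delta)%R ->
  hausdorff_delta s delta A <= hausdorff s A.
Proof. by move=> d0; apply: ereal_sup_ubound; exists delta. Qed.

Lemma Hd_mono s delta (A B : set 'rV[R]_d) : A `<=` B ->
  hausdorff_delta s delta A <= hausdorff_delta s delta B.
Proof.
move=> AB; apply: ereal_inf_le_tmp => _ [C [hC hd] <-].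
by exists C => //; split => //; apply: subset_trans AB hC.
Qed.

Lemma null_bigcup s (A : nat -> set 'rV[R]_d) delta : (0 < delta)%R ->
  (forall k, hausdorff_delta s delta (A k) <= 0) ->
  hausdorff_delta s delta (\bigcup_k A k) <= 0.
Proof.
move=> d0 hA; apply/lee_addgt0Pr => eps eps0; rewrite add0e.
have hC : forall k, exists C : nat -> set 'rV[R]_d,
    (A k `<=` \bigcup_i C i /\ forall i, ediam (C i) <= delta%:E) /\
    \sum_(0 <= i <oo) hcontrib s (C i) <= (eps / (2 ^ k.+1)%:R)%:E.
  move=> k.
  have : hausdorff_delta s delta (A k) < (eps / (2 ^ k.+1)%:R)%:E.
    by apply: le_lt_trans (hA k) _; rewrite lte_fin divr_gt0.
  by move=> /ereal_inf_lt [_ [C hC <-] hlt]; exists C; split => //; apply: ltW.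
have [C hCC] := choice hC.
pose D n := if pickle_inv n is Some kj then C kj.1 kj.2 else set0.
apply: ge_ereal_inf; exists (\sum_(0 <= i <oo) hcontrib s (D i)).
  exists D => //; split.
  - move=> x [k _ Akx]; have [j _ Cx] := (hCC k).1.1 x Akx.
    by exists (pickle (k, j)) => //; rewrite /D pickleK_inv.
  - move=> n; rewrite /D; case: pickle_inv => [[k j]|]; first exact: (hCC k).1.2 j.
    by rewrite ediam_set0 leNye.
rewrite nneseries_esumT; last by move=> n; exact: hcontrib_ge0.
have -> : \esum_(i in [set: nat]) hcontrib s (D i) =
    \esum_(i in pickle @` [set: nat * nat]) hcontrib s (D i).
  rewrite [RHS]esum_mkcond; apply: eq_esum => n _; case: ifPn => // hn.
  rewrite /D; case E: (pickle_inv n) => [kj|]; last by rewrite hcontrib_set0.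
  exfalso; move/negP: hn; apply; rewrite inE; exists kj => //.
  by have := @pickle_invK (nat * nat)%type n; rewrite E /=.
rewrite esum_image; last by move=> a b _ _; exact: (pcan_inj (@pickleK (nat * nat)%type)).
have -> : \esum_(kj in [set: nat * nat]) hcontrib s (D (pickle kj)) =
    \esum_(kj in [set: nat] `*`` (fun=> [set: nat])) hcontrib s (C kj.1 kj.2).
  rewrite (_ : [set: nat] `*`` _ = [set: nat * nat]); last by apply/seteqP; split.
  by apply: eq_esum => kj _; rewrite /D pickleK_inv.
rewrite -(@esum_esum _ _ _ [set: nat] (fun=> [set: nat]) (fun k j => hcontrib s (C k j))); last by move=> *; exact: hcontrib_ge0.
apply: (le_trans _ (epsilon_trick0 xpredT (ltW eps0))).
rewrite -nneseries_esumT; last by move=> n; apply: esum_ge0 => *; exact: hcontrib_ge0.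
apply: lee_nneseries => k _; first by move=> _; apply: esum_ge0 => *; exact: hcontrib_ge0.
rewrite -nneseries_esumT; last by move=> n; exact: hcontrib_ge0.
exact: (hCC k).2.
Qed.

End Haus.
End Aux.
Theorem lemma4p8 (R : realType) (d : nat) (U : set 'rV[R]_d) (mu T : R)
  (u : R -> 'rV[R]_d -> R) (t : R) :
  open U -> 0 < mu ->
  (forall s x, 0 <= s <= T -> U x -> 0 <= u s x) ->
  (forall s, 0 <= s <= T -> {within U, continuous (u s)}) ->
  0 < t <= T ->
  (* monotone decreasing in eta *)
  (forall eta1 eta2 sigma r0, 0 < eta1 -> eta1 <= eta2 -> 0 < sigma -> 0 < r0 ->
     GammaPlus_esr U mu u t eta2 sigma r0 `<=` GammaPlus_esr U mu u t eta1 sigma r0) /\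
  (* monotone decreasing in r0 *)
  (forall eta sigma r1 r2, 0 < eta -> 0 < sigma -> 0 < r1 -> r1 <= r2 ->
     GammaPlus_esr U mu u t eta sigma r2 `<=` GammaPlus_esr U mu u t eta sigma r1) /\
  (* monotone increasing in sigma *)
  (forall eta sigma1 sigma2 r0, 0 < eta -> 0 < sigma1 -> sigma1 <= sigma2 -> 0 < r0 ->
     GammaPlus_esr U mu u t eta sigma1 r0 `<=` GammaPlus_esr U mu u t eta sigma2 r0) /\
  (* representation of Gamma^+ *)
  GammaPlus U mu u t =
    \bigcup_(eta in [set e : R | 0 < e])
      \bigcap_(sigma in [set e : R | 0 < e])
        \bigcup_(r0 in [set e : R | 0 < e]) GammaPlus_esr U mu u t eta sigma r0 /\
  (* consequence for H^{d-1} *)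
  ((0 < hausdorff d.-1 (GammaPlus U mu u t))%E ->
     exists eta : R, 0 < eta /\
       forall sigma : R, 0 < sigma -> exists r0 : R, 0 < r0 /\
         (0 < hausdorff d.-1 (GammaPlus_esr U mu u t eta sigma r0))%E).
Proof.
move=> _ _ _ _ _.
have rp := @rep R d U mu u t.
split; first by move=> eta1 eta2 sigma r0 e1 le _ _; exact: (@mono_eta R d).
split; first by move=> eta sigma r1 r2 _ _ _ le; exact: (@mono_r0 R d).
split; first by move=> eta s1 s2 r0 _ _ le _; exact: (@mono_sigma R d).
split; first exact rp.
move=> Hpos; apply: contrapT => hneg.
have hs : forall n : nat, exists sg : R, 0 < sg /\ forall r0, 0 < r0 ->
    (hausdorff d.-1 (GammaPlus_esr U mu u t n.+1%:R^-1 sg r0) <= 0)%E.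
  move=> n; apply: contrapT => h; apply: hneg; exists n.+1%:R^-1; split; first by rewrite invr_gt0.
  move=> sg sg0; apply: contrapT => h2; apply: h; exists sg; split => // r0 r00.
  rewrite leNgt; apply/negP => hp; by apply: h2; exists r0.
have [sg hsg] := choice hs.
have sub : GammaPlus U mu u t `<=` \bigcup_n \bigcup_m
    GammaPlus_esr U mu u t n.+1%:R^-1 (sg n) m.+1%:R^-1.
  rewrite rp => x [eta eta0 hx].
  have [n hn] := @small_inv R _ eta0.
  have [r0 r00 hxr] := hx (sg n) (hsg n).1.
  have [m hm] := @small_inv R _ r00.
  exists n => //; exists m => //.
  apply: (@mono_eta R d U mu u t _ eta); [by rewrite invr_gt0 | exact: hn | ].
  exact: (@mono_r0 R d U mu u t _ _ _ _ hm).
have : (hausdorff d.-1 (GammaPlus U mu u t) <= 0)%E.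
  apply: (@H_le0 R d) => delta d0; apply: le_trans (@Hd_mono R d _ _ _ _ sub) _.
  apply: (@null_bigcup R d) => // n; apply: (@null_bigcup R d) => // m.
  apply: le_trans (@Hd_le_H R d _ _ _ d0) _; apply: (hsg n).2; by rewrite invr_gt0.
by rewrite leNgt Hpos.
Qed.
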